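(* Let $\mathbb{X}=(X,\tau_{\mathbb{X}})$ be a $T_0$ topological space and $\Omega_0$ a viable base of $\mathbb{X}$. Then the spectral compactification $\widehat{\mathbb{X}}_{\Omega_0}$ is a core-compact space, and the map $\iota:X\to\widehat{X}$, $\iota(x)=\{I\in\mathrm{Idl}(\Omega_0): x\in\bigcup I\}$, is a dense topological embedding (continuous, injective, relatively open, with dense image). That is, $\widehat{\mathbb{X}}_{\Omega_0}$ is a core-compactification of $\mathbb{X}$.
   Context: A viable base of $\mathbb{X}$ is a family $\Omega_0\subseteq\tau_{\mathbb{X}}$ closed under finite unions and finite intersections (so $\emptyset,X\in\Omega_0$) which is a base of $\tau_{\mathbb{X}}$. $\mathrm{Idl}(\Omega_0)$ is the set of ideals (nonempty, downward closed, directed subsets) of $(\Omega_0,\subseteq)$, ordered by inclusion; it is a complete lattice. A completely prime filter of a complete lattice $L$ is a nonempty upward closed $F\subseteq L$ closed under binary meets such that whenever $\bigvee A\in F$ for $A\subseteq L$ then $A\cap F\neq\emptyset$. $\widehat{\mathbb{X}}_{\Omega_0}$ is the set $\widehat{X}$ of completely prime filters of $\mathrm{Idl}(\Omega_0)$ with the (hull-kernel) topology whose open sets are exactly $\mathcal{O}_I=\{y\in\widehat{X}: I\in y\}$, $I\in\mathrm{Idl}(\Omega_0)$. A space is core-compact if its lattice of open sets under inclusion is a continuous lattice. A core-compactification of $\mathbb{X}$ is a core-compact space into which $\mathbb{X}$ embeds as a dense subspace. *)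

(* Defs.v *)
From mathcomp Require Import all_boot all_order.
From mathcomp Require Import all_classical all_reals all_analysis.
Set Implicit Arguments. Unset Strict Implicit. Unset Printing Implicit Defensive.
Local Open Scope classical_set_scope.

Section Order.
Variables (U : Type) (P : set U) (le : U -> U -> Prop).

Definition is_lub (A : set U) (s : U) : Prop :=
  P s /\ (forall a, A a -> le a s) /\
  (forall t, P t -> (forall a, A a -> le a t) -> le s t).

Definition is_glb (A : set U) (m : U) : Prop :=
  P m /\ (forall a, A a -> le m a) /\
  (forall t, P t -> (forall a, A a -> le t a) -> le t m).

Definition directed_in (D : set U) : Prop :=
  D `<=` P /\ (exists d, D d) /\
  (forall a b, D a -> D b -> exists c, D c /\ le a c /\ le b c).

Definition complete_lattice : Prop :=
  forall A, A `<=` P -> exists s, is_lub A s.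

Definition way_below (x y : U) : Prop :=
  forall D s, directed_in D -> is_lub D s -> le y s -> exists d, D d /\ le x d.

Definition continuous_lattice : Prop :=
  complete_lattice /\
  forall y, P y -> is_lub [set x | P x /\ way_below x y] y.

Definition completely_prime_filter (F : set U) : Prop :=
  F `<=` P /\ (exists x, F x) /\
  (forall x y, F x -> P y -> le x y -> F y) /\
  (forall x y m, F x -> F y -> is_glb [set x; y] m -> F m) /\
  (forall A s, A `<=` P -> is_lub A s -> F s -> exists a, A a /\ F a).
End Order.

Section Spaces.
Variable V : Type.

Definition is_topology (C : set V) (tau : set (set V)) : Prop :=
  (forall W, tau W -> W `<=` C) /\ tau set0 /\ tau C /\
  (forall W1 W2, tau W1 -> tau W2 -> tau (W1 `&` W2)) /\
  (forall F, F `<=` tau -> tau (\bigcup_(W in F) W)).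

Definition core_compact (tau : set (set V)) : Prop :=
  continuous_lattice tau (@subset V).
End Spaces.

Section Spectral.
Variable T : topologicalType.

Definition viable_base (Om : set (set T)) : Prop :=
  Om `<=` open /\
  (forall A B, Om A -> Om B -> Om (A `|` B)) /\
  (forall A B, Om A -> Om B -> Om (A `&` B)) /\
  Om set0 /\ Om setT /\
  (forall W, open W -> exists F, F `<=` Om /\ W = \bigcup_(B in F) B).

Definition is_ideal (Om : set (set T)) (I : set (set T)) : Prop :=
  I `<=` Om /\ (exists A, I A) /\
  (forall A B, I B -> Om A -> A `<=` B -> I A) /\
  (forall A B, I A -> I B -> exists C, I C /\ A `<=` C /\ B `<=` C).

Definition Xhat (Om : set (set T)) : set (set (set (set T))) :=
  completely_prime_filter (is_ideal Om) (@subset (set T)).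

Definition O_I (Om : set (set T)) (I : set (set T)) : set (set (set (set T))) :=
  [set y | Xhat Om y /\ y I].

Definition tau_hat (Om : set (set T)) : set (set (set (set (set T)))) :=
  [set W | exists I, is_ideal Om I /\ W = O_I Om I].

Definition iotaX (Om : set (set T)) (x : T) : set (set (set T)) :=
  [set I | is_ideal Om I /\ x \in \bigcup_(A in I) A].
End Spectral.

(* Main.v *)
Require Import Defs.
From mathcomp Require Import all_boot all_order.
From mathcomp Require Import all_classical all_reals all_analysis.
Set Implicit Arguments. Unset Strict Implicit. Unset Printing Implicit Defensive.
Local Open Scope classical_set_scope.

Lemma ideal0 (T : topologicalType) (Om I : set (set T)) :
  viable_base Om -> is_ideal Om I -> I set0.
Proof. case=> _ [ _ [ _ [ O0 _]]] [ _ [[A IA] [dc _]]]; exact: dc _ _ IA O0 (sub0set A). Qed.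

Lemma idealU (T : topologicalType) (Om I : set (set T)) B C :
  viable_base Om -> is_ideal Om I -> I B -> I C -> I (B `|` C).
Proof.
case=> _ [ OU _] [IO [ _ [dc dir]]] IB IC.
have [D [ID [BD CD]]] := dir _ _ IB IC.
apply: (dc _ _ ID (OU _ _ (IO _ IB) (IO _ IC))).
by move=> x [/BD|/CD].
Qed.

Lemma ideal_of (T : topologicalType) (Om I : set (set T)) :
  viable_base Om -> I `<=` Om -> (exists A, I A) ->
  (forall A B, I B -> Om A -> A `<=` B -> I A) ->
  (forall B C, I B -> I C -> I (B `|` C)) -> is_ideal Om I.
Proof.
move=> hO IO ne dc un; split=> //; split=> //; split=> //.
by move=> A B IA IB; exists (A `|` B); split; [exact: un|split; [exact: subsetUl|exact: subsetUr]].
Qed.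

Definition downI (T : topologicalType) (Om : set (set T)) A := [set B | Om B /\ B `<=` A].

Lemma down_ideal (T : topologicalType) (Om : set (set T)) A :
  viable_base Om -> Om A -> is_ideal Om (downI Om A).
Proof.
move=> hO OA; have [ _ [ OU _]] := hO.
apply: ideal_of => //; first by move=> B [].
- by exists A; split.
- by move=> B C [ _ CA] OB BC; split => //; apply: subset_trans CA.
- by move=> B C [ OB BA] [ OC CA]; split; [exact: OU | move=> x [/BA|/CA]].
Qed.

Lemma Om_ideal (T : topologicalType) (Om : set (set T)) :
  viable_base Om -> is_ideal Om Om.
Proof.
move=> hO; have [ _ [ OU [ _ [ O0 _]]]] := hO.
apply: ideal_of => //; first by exists set0.
Qed.

Lemma idealI (T : topologicalType) (Om I J : set (set T)) :
  viable_base Om -> is_ideal Om I -> is_ideal Om J -> is_ideal Om (I `&` J).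
Proof.
move=> hO hI hJ; apply: ideal_of => //.
- by move=> B [/(hI.1)].
- by exists set0; split; [exact: ideal0 hO hI|exact: ideal0 hO hJ].
- by move=> A B [IB JB] OA AB; split; [exact: hI.2.2.1 IB OA AB|exact: hJ.2.2.1 JB OA AB].
- by move=> B C [IB JB] [IC JC]; split; [exact: idealU hO hI IB IC|exact: idealU hO hJ JB JC].
Qed.

Definition prime_filter (T : topologicalType) (Om G : set (set T)) :=
 G `<=` Om /\ G setT /\ ~ G set0 /\ (forall B C, G B -> Om C -> B `<=` C -> G C) /\
   (forall B C, G B -> G C -> G (B `&` C)) /\
   (forall B C, Om B -> Om C -> G (B `|` C) -> G B \/ G C).

Definition yG (T : topologicalType) (Om G : set (set T)) :=
  [set I | is_ideal Om I /\ exists B, I B /\ G B].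

Lemma cpf_yG (T : topologicalType) (Om G : set (set T)) :
  viable_base Om -> prime_filter Om G -> Xhat Om (yG Om G).
Proof.
move=> hO [GO [GT [G0 [Gup [GI GU]]]]]; have [ Oo [ OU [ OI [ O0 [ OT Ob]]]]] := hO.
split; first by move=> I [].
split; first by exists Om; split; [exact: Om_ideal | exists setT].
split.
  move=> I J [ _ [B [IB GB]]] Ji IJ; split=> //; exists B; split=> //; exact: IJ.
split.
  move=> I J m [Ii [B [IB GB]]] [Ji [C [JC GC]]] [mi [mlb mgr]].
  split=> //; exists (B `&` C); split; last exact: GI.
  have : (I `&` J) `<=` m.
    apply: mgr; first exact: idealI.
    by move=> a [->|->] x [].
  apply; split.
    exact: Ii.2.2.1 IB (OI _ _ (GO _ GB) (GO _ GC)) (@subIsetl _ _ _).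
  exact: Ji.2.2.1 JC (OI _ _ (GO _ GB) (GO _ GC)) (@subIsetr _ _ _).
move=> A s As [si [sub_ub sleast]] [ _ [B [sB GB]]].
apply: contrapT => nA.
pose s' := [set B | Om B /\ ~ G B].
have s'i : is_ideal Om s'.
  apply: ideal_of => //; first by move=> C [].
  - by exists set0.
  - by move=> C D [ OD nGD] OC CD; split => // GC; apply: nGD; exact: Gup GC OD CD.
  - by move=> C D [ OC nC] [ OD nD]; split; [exact: OU|case/GU => //].
have : s `<=` s'.
  apply: sleast => // a Aa C aC; split; first exact: (As a Aa).1 C aC.
  move=> GC; apply: nA; exists a; split => //; split; [exact: As| by exists C].
by move=> /(_ B sB) [].
Qed.

Lemma PIT (T : topologicalType) (Om L : set (set T)) A :
  viable_base Om -> is_ideal Om L -> Om A -> ~ L A ->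
  exists G, prime_filter Om G /\ G A /\ (forall B, L B -> ~ G B).
Proof.
move=> hO hL OA nLA; have [ Oo [ OU [ OI [ O0 [ OT Ob]]]]] := hO.
pose PP (K : set (set T)) := K `<=` Om /\ (forall B C, K B -> Om C -> C `<=` B -> K C) /\
  (forall B C, K B -> K C -> K (B `|` C)) /\ ~ K A /\ (forall B C, K B -> L C -> K (B `|` C)).
have [K [[KO [Kdc [KU [nKA KL]]]] Kmax]] : exists K, PP K /\ forall B, K `<` B -> ~ PP B.
  apply: Zorn_bigcup => F FP Ftot; split.
    by move=> B [K FK KB]; exact: (FP K FK).1 B KB.
  split.
    by move=> B C [K FK KB] OC CB; exists K => //; exact: (FP K FK).2.1 B C KB OC CB.
  split.
    move=> B C [K1 FK1 KB] [K2 FK2 KC].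
    have [K12|K21] := Ftot _ _ FK1 FK2.
      by exists K2 => //; apply: (FP K2 FK2).2.2.1 => //; exact: K12.
    by exists K1 => //; apply: (FP K1 FK1).2.2.1 => //; exact: K21.
  split.
    by move=> [K FK KA]; exact: (FP K FK).2.2.2.1 KA.
  by move=> B C [K FK KB] LC; exists K => //; exact: (FP K FK).2.2.2.2 B C KB LC.
have [k0 Kk0] : exists k, K k.
  apply: contrapT => nK; apply: (Kmax L).
    split; first by move=> B KB; exfalso; apply: nK; exists B.
    move=> LK; have [B LB] := hL.2.1; apply: nK; exists B; exact: LK.
  split; first exact: hL.1.
  split; first by move=> B C LB OC CB; exact: hL.2.2.1 LB OC CB.
  split; first by move=> B C LB LC; exact: idealU hO hL LB LC.
  split=> //; move=> B C LB LC; exact: idealU hO hL LB LC.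
have K0 : K set0 by apply: Kdc Kk0 O0 (sub0set _).
have LK : L `<=` K.
  move=> C LC; apply: Kdc (KL _ _ Kk0 LC) (hL.1 _ LC) _; exact: subsetUr.
have key : forall B, Om B -> ~ K B -> exists k, K k /\ A `<=` k `|` B.
  move=> B OB nKB.
  pose KB := [set D | Om D /\ exists k, K k /\ D `<=` k `|` B].
  apply: contrapT => nex.
  apply: (Kmax KB).
    split; first by move=> D KD; split; [exact: KO|exists D; split => //; exact: subsetUl].
    by move=> KBK; apply: nKB; apply: KBK; split => //; exists k0; split => //; exact: subsetUr.
  split; first by move=> D [].
  split; first by move=> D C [ OD [k [Kk Dk]]] OC CD; split => //; exists k; split => //; exact: subset_trans Dk.
  split.
    move=> D1 D2 [ OD1 [k1 [Kk1 D1k]]] [ OD2 [k2 [Kk2 D2k]]]; split; first exact: OU.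
    exists (k1 `|` k2); split; first exact: KU.
    by move=> x [/D1k [?|?]|/D2k [?|?]]; [left; left|right|left; right|right].
  split; first by move=> [ OA' [k [Kk Ak]]]; apply: nex; exists k.
  move=> D C [ OD [k [Kk Dk]]] LC; split; first exact: OU OD (hL.1 _ LC).
  exists (k `|` C); split; first exact: KL.
  by move=> x [/Dk [?|?]|?]; [left; left|right|left; right].
exists [set B | Om B /\ ~ K B].
split; last first.
  split; first by split.
  by move=> B LB [_]; apply; exact: LK.
split; first by move=> B [].
split; first by split => // KT; apply: nKA; apply: Kdc KT OA (subsetT _).
split; first by move=> [].
split; first by move=> B C [ OB nKB] OC BC; split => // KC; apply: nKB; exact: Kdc KC OB BC.
split.
  move=> B C [ OB nKB] [ OC nKC]; split; first exact: OI.
  move=> KBC.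
  have [k1 [Kk1 Ak1]] := key B OB nKB.
  have [k2 [Kk2 Ak2]] := key C OC nKC.
  apply: nKA; apply: Kdc (KU _ _ (KU _ _ Kk1 Kk2) KBC) OA _.
  move=> x Ax; have := Ak1 x Ax; have := Ak2 x Ax.
  case=> [x2|xC] [x1|xB]; [by left; right|by left; right|by left; left|by right].
move=> B C OB OC [ OBC nKBC].
have [KB|nKB] := pselect (K B); last by left.
have [KC|nKC] := pselect (K C); last by right.
by exfalso; apply: nKBC; exact: KU.
Qed.

Lemma PIT' (T : topologicalType) (Om L : set (set T)) A :
  viable_base Om -> is_ideal Om L -> Om A -> ~ L A ->
  exists y, Xhat Om y /\ (forall K, is_ideal Om K -> K A -> y K) /\ ~ y L.
Proof.
move=> hO hL OA nLA; have [G [pG [GA nG]]] := PIT hO hL OA nLA.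
exists (yG Om G); split; first exact: cpf_yG.
split; first by move=> K Ki KA; split => //; exists A.
by move=> [_ [B [LB GB]]]; exact: nG LB GB.
Qed.

Lemma upX (T : topologicalType) (Om : set (set T)) y I J :
  Xhat Om y -> y I -> is_ideal Om J -> I `<=` J -> y J.
Proof. move=> Xy yI Ji IJ; exact: Xy.2.2.1 I J yI Ji IJ. Qed.

Lemma bot_not_in (T : topologicalType) (Om : set (set T)) y :
  viable_base Om -> Xhat Om y -> ~ y (downI Om set0).
Proof.
move=> hO Xy yb; have O0 := hO.2.2.2.1.
have lub : is_lub (is_ideal Om) (@subset (set T)) set0 (downI Om set0).
  split; first exact: down_ideal.
  split; first by [].
  move=> t ti _ B [_ B0]; move: B0; rewrite subset0 => ->; exact: ideal0 ti.
by have [a [[] _]] := Xy.2.2.2.2 set0 (downI Om set0) (sub0set _) lub yb.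
Qed.

Lemma top_in (T : topologicalType) (Om : set (set T)) y :
  viable_base Om -> Xhat Om y -> y Om.
Proof.
move=> hO Xy; have [x yx] := Xy.2.1.
apply: (upX Xy yx (Om_ideal hO)); exact: (Xy.1 x yx).1.
Qed.

Definition supI (T : topologicalType) (Om : set (set T)) (A : set (set (set T))) :=
  [set B | Om B /\ forall t, is_ideal Om t -> (forall a, A a -> a `<=` t) -> t B].

Lemma sup_lub (T : topologicalType) (Om : set (set T)) A :
  viable_base Om -> A `<=` is_ideal Om -> is_lub (is_ideal Om) (@subset (set T)) A (supI Om A).
Proof.
move=> hO Ai; have O0 := hO.2.2.2.1; have OU := hO.2.1.
have si : is_ideal Om (supI Om A).
  apply: ideal_of => //; first by move=> B [].
  - by exists set0; split => // t ti _; exact: ideal0 ti.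
  - move=> B C [OC Ht] OB BC; split => // t ti H; exact: ti.2.2.1 (Ht t ti H) OB BC.
  - move=> B C [OB HB] [OC HC]; split; first exact: OU.
    by move=> t ti H; exact: idealU hO ti (HB t ti H) (HC t ti H).
split => //; split.
  move=> a Aa B aB; split; first exact: (Ai a Aa).1 B aB.
  by move=> t ti H; exact: H a Aa B aB.
by move=> t ti H B [_ HB]; exact: HB t ti H.
Qed.

Lemma spatial (T : topologicalType) (Om K L : set (set T)) :
  viable_base Om -> is_ideal Om K -> is_ideal Om L -> O_I Om K `<=` O_I Om L -> K `<=` L.
Proof.
move=> hO Ki Li sub B KB; apply: contrapT => nLB.
have [y [Xy [yK nyL]]] := PIT' hO Li (Ki.1 _ KB) nLB.
have [_ yL] := sub y (conj Xy (yK K Ki KB)).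
exact: nyL yL.
Qed.

Lemma tunion (T : topologicalType) (Om : set (set T)) F :
  viable_base Om -> F `<=` tau_hat Om -> tau_hat Om (\bigcup_(W in F) W).
Proof.
move=> hO Ft.
pose A := [set I | is_ideal Om I /\ F (O_I Om I)].
have Ai : A `<=` is_ideal Om by move=> I [].
have lub := sup_lub hO Ai.
exists (supI Om A); split; first exact: lub.1.
apply/seteqP; split.
  move=> y [W FW Wy]; have [I [Ii WI]] := Ft W FW.
  rewrite WI in Wy FW; case: Wy => Xy yI; split => //.
  by apply: (upX Xy yI lub.1); apply: lub.2.1; split.
move=> y [Xy ys].
have [a [[ai Fa] ya]] := Xy.2.2.2.2 A (supI Om A) Ai lub ys.
by exists (O_I Om a) => //; split.
Qed.

Lemma tlub (T : topologicalType) (Om : set (set T)) D s :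
  viable_base Om -> D `<=` tau_hat Om ->
  is_lub (tau_hat Om) (@subset _) D s -> s `<=` \bigcup_(W in D) W.
Proof.
move=> hO Dt [_ [_ H]]; apply: H; first exact: tunion.
by move=> a Da x ax; exists a.
Qed.

Lemma wb (T : topologicalType) (Om I : set (set T)) A :
  viable_base Om -> is_ideal Om I -> I A ->
  way_below (tau_hat Om) (@subset _) (O_I Om (downI Om A)) (O_I Om I).
Proof.
move=> hO Ii IA D s [Dt [[d0 Dd0] Ddir]] slub Is.
have OA := Ii.1 _ IA.
pose J := [set B | exists K, is_ideal Om K /\ D (O_I Om K) /\ K B].
have Ji : is_ideal Om J.
  apply: ideal_of => //.
  - by move=> B [K [Ki [_ KB]]]; exact: Ki.1.
  - have [K0 [K0i e]] := Dt d0 Dd0.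
    exists set0, K0; split => //; split; [by rewrite -e|exact: ideal0 K0i].
  - move=> B C [K [Ki [DK KC]]] OB BC; exists K; split => //; split => //.
    exact: Ki.2.2.1 KC OB BC.
  - move=> B C [K1 [K1i [D1 B1]]] [K2 [K2i [D2 C2]]].
    have [c [Dc [s1 s2]]] := Ddir _ _ D1 D2.
    have [K3 [K3i ec]] := Dt c Dc.
    rewrite ec in Dc s1 s2.
    exists K3; split => //; split => //.
    apply: (idealU hO K3i); [exact: (spatial hO K1i K3i s1) | exact: (spatial hO K2i K3i s2)].
have dAi := down_ideal hO OA.
have AdA : downI Om A A by split.
have [[K [Ki [DK KA]]]|nJA] := pselect (J A).
  exists (O_I Om K); split => //.
  move=> y [Xy yA]; split => //; apply: (upX Xy yA Ki).
  by move=> B [OB BA]; exact: Ki.2.2.1 KA OB BA.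
have [y [Xy [yK nyJ]]] := PIT' hO Ji OA nJA.
have yI : O_I Om I y.
  split => //; apply: (upX Xy (yK _ dAi AdA) Ii).
  by move=> B [OB BA]; exact: Ii.2.2.1 IA OB BA.
have [d Dd dy] := tlub hO Dt slub (Is y yI).
have [K [Ki dK]] := Dt d Dd.
rewrite dK in dy Dd; case: dy => _ yK'.
exfalso; apply: nyJ; apply: (upX Xy yK' Ji).
by move=> B KB; exists K.
Qed.

Lemma iotaE (T : topologicalType) (Om : set (set T)) x :
  iotaX Om x = yG Om [set B | Om B /\ B x].
Proof.
apply/seteqP; split => I [Ii H]; split => //.
  by case: (set_mem H) => B IB Bx; exists B; split => //; split => //; exact: Ii.1.
by case: H => B [IB [_ Bx]]; apply: mem_set; exists B.
Qed.

Lemma iotaX_Xhat (T : topologicalType) (Om : set (set T)) x :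
  viable_base Om -> Xhat Om (iotaX Om x).
Proof.
move=> hO; have [ Oo [ OU [ OI [ O0 [ OT Ob]]]]] := hO.
rewrite iotaE; apply: cpf_yG => //.
split; first by move=> B [].
split; first by [].
split; first by case.
split; first by move=> B C [_ Bx] OC BC; split => //; exact: BC.
split; first by move=> B C [ OB Bx] [ OC Cx]; split; [exact: OI|].
by move=> B C OB OC [_ [Bx|Cx]]; [left|right].
Qed.

Lemma sep (T : topologicalType) (Om : set (set T)) x y A :
  viable_base Om -> nbhs x A -> ~ A y -> iotaX Om x = iotaX Om y -> False.
Proof.
move=> hO; have [ Oo [ OU [ OI [ O0 [ OT Ob]]]]] := hO.
rewrite nbhsE => -[U [oU Ux] UA] nAy e.
have [F [FO UF]] := Ob U oU.
rewrite UF in Ux UA; case: Ux => B FB Bx.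
have OB := FO B FB.
have : iotaX Om x (downI Om B).
  split; first exact: down_ideal hO OB.
  by apply: mem_set; exists B; [split|].
rewrite e => -[_ /set_mem [C [_ CB] Cy]].
by apply: nAy; apply: UA; exists B => //; exact: CB.
Qed.
Unset Implicit Arguments.

Theorem mainTheorem15 (T : topologicalType) (Om : set (set T)) :
  kolmogorov_space T -> viable_base Om ->
  is_topology (Xhat Om) (tau_hat Om) /\
      core_compact (tau_hat Om) /\
      (forall x, Xhat Om (iotaX Om x)) /\
      (forall W, tau_hat Om W -> open (iotaX Om @^-1` W)) /\
      injective (iotaX Om) /\
      (forall U, open U -> exists W, tau_hat Om W /\ iotaX Om @` U = W `&` range (iotaX Om)) /\
      (forall W, tau_hat Om W -> W !=set0 -> exists x, W (iotaX Om x)).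
Proof.
move=> kT hO; have [ Oo [ OU [ OI [ O0 [ OT Ob]]]]] := hO.
split.
  split; first by move=> W [I [_ ->]] y [].
  split.
    exists (downI Om set0); split; first exact: down_ideal.
    apply/seteqP; split => // y [Xy yb]; exact: bot_not_in hO Xy yb.
  split.
    exists Om; split; first exact: Om_ideal.
    apply/seteqP; split => y; last by case.
    by move=> Xy; split => //; exact: top_in.
  split; last by move=> F; exact: tunion.
  move=> _ _ [I [Ii ->]] [J [Ji ->]].
  exists (I `&` J); split; first exact: idealI.
  apply/seteqP; split.
    move=> y [[Xy yI] [_ yJ]]; split => //.
    apply: (Xy.2.2.2.1 I J _ yI yJ).
    split; first exact: idealI.
    split; first by move=> a [->|->]; [exact: subIsetl|exact: subIsetr].
    by move=> t _ H z tz; split; [apply: (H I)|apply: (H J)] => //; [left|right].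
  move=> y [Xy yIJ]; split; split => //.
    by apply: (upX Xy yIJ Ii); exact: subIsetl.
  by apply: (upX Xy yIJ Ji); exact: subIsetr.
split.
  split.
    move=> A At; exists (\bigcup_(W in A) W); split; first exact: tunion.
    split; first by move=> a Aa x ax; exists a.
    by move=> t _ H x [a Aa ax]; exact: H a Aa x ax.
  move=> _ [I [Ii ->]].
  split; first by exists I.
  split.
    move=> V [tV wbV].
    have dir : directed_in (tau_hat Om) (@subset _) [set O_I Om I].
      split; first by move=> _ ->; exists I.
      split; first by exists (O_I Om I).
      by move=> a b -> ->; exists (O_I Om I); split => //; split => // z.
    have lub : is_lub (tau_hat Om) (@subset _) [set O_I Om I] (O_I Om I).
      split; first by exists I.
      split; first by move=> a ->.
      by move=> t _ H; exact: H.
    by have [d [-> Vd]] := wbV _ _ dir lub (@subset_refl _ _).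
  move=> t tt H y [Xy yI].
  pose Dn := [set K | exists A, I A /\ K = downI Om A].
  have Dni : Dn `<=` is_ideal Om by move=> _ [A [IA ->]]; exact: down_ideal hO (Ii.1 _ IA).
  have lub : is_lub (is_ideal Om) (@subset _) Dn I.
    split => //; split.
      by move=> _ [A [IA ->]] B [ OB BA]; exact: Ii.2.2.1 IA OB BA.
    move=> t' _ H' B IB.
    by apply: (H' (downI Om B)); [exists B | split => //; exact: Ii.1].
  have [_ [[A [IA ->]] yA]] := Xy.2.2.2.2 Dn I Dni lub yI.
  apply: (H (O_I Om (downI Om A))); last by split.
  split; last exact: wb.
  by exists (downI Om A); split => //; exact: down_ideal hO (Ii.1 _ IA).
split; first by move=> x; exact: iotaX_Xhat.
split.
  move=> _ [I [Ii ->]].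
  have -> : iotaX Om @^-1` O_I Om I = \bigcup_(B in I) B.
    apply/seteqP; split.
      by move=> x [_ [_ /set_mem]].
    move=> x Hx; split; first exact: iotaX_Xhat.
    by split => //; apply: mem_set.
  by apply: bigcup_open => B IB; apply: Oo; exact: Ii.1.
split.
  move=> x y e; apply: contrapT => nxy.
  have nxy' : x != y by apply/eqP.
  have [A [[/set_mem Ax /set_mem yA]|[/set_mem Ay /set_mem xA]]] := kT x y nxy'.
    exact: sep hO Ax yA e.
  exact: sep hO Ay xA (esym e).
split.
  move=> U oU.
  pose I := [set B | Om B /\ B `<=` U].
  have Ii : is_ideal Om I.
    apply: ideal_of => //; first by move=> B [].
    - by exists set0; split.
    - by move=> B C [_ CU] OB BC; split => //; exact: subset_trans CU.
    - by move=> B C [ OB BU] [ OC CU]; split; [exact: OU|move=> z [/BU|/CU]].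
  exists (O_I Om I); split; first by exists I.
  apply/seteqP; split.
    move=> _ [x Ux <-]; split; last by exists x.
    split; first exact: iotaX_Xhat.
    split => //; apply: mem_set.
    have [F [FO UF]] := Ob U oU.
    have Ux' := Ux; rewrite UF in Ux'; case: Ux' => B FB Bx.
    exists B => //; split; first exact: FO.
    by rewrite UF; move=> z Bz; exists B.
  move=> z [Oz [x _ ex]]; subst z; case: Oz => _ [_ /set_mem [B [_ BU] Bx]].
  by exists x => //; exact: BU.
move=> _ [I [Ii ->]] [y [Xy yI]].
have [[B [IB [x Bx]]]|nB] := pselect (exists B, I B /\ exists x, B x).
  exists x; split; first exact: iotaX_Xhat.
  by split => //; apply: mem_set; exists B.
exfalso; apply: (bot_not_in hO Xy); apply: (upX Xy yI (down_ideal hO O0)).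
move=> B IB; split; first exact: Ii.1.
by move=> z Bz; apply: nB; exists B; split => //; exists z.
Qed.
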